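(* Suppose the random walk $R$ is irreducible, aperiodic, positive recurrent and has negative drift, and let $F:S\to[0,\infty)$ be $C$-linear with coefficients $f_{k,i}$. Let $$f^*=\max_{k\in K}\max_{i=0,\dots,M}\max\{f_{k,i},1\},\qquad v_i=\frac{-f^*}{\sup_{n\in S:\,i\in I(n)}\{s^+_i(n)-s^-_i(n)\}}\ (i=1,\dots,M),\qquad V(n)=\sum_{i=1}^M v_i n_i^2.$$ Then there exists a constant $b_0<\infty$ such that for all $n\in S$, $u\in N_{c(n)}$ and $t\ge0$, $$|D^t_u(n)|\le V(n)+V(n+u)+b_0.$$
   Context: Let $M\ge 1$ and $S=\{0,1,2,\dots\}^M$. For $n\in S$ let $N(n)=\{u\in\{-1,0,1\}^M: n+u\in S\}$. A partition $C=\{C_k\}_{k\in K}$ ($K$ finite) of $S$ is a family of pairwise disjoint sets covering $S$ such that $N(n)=N(n')$ whenever $n,n'$ lie in the same $C_k$; write $N_k$ for this common set and $c(n)$ for the index $k$ with $n\in C_k$. The random walk $R$ is a discrete-time Markov chain on $S$ with transition probabilities $P(n,n+u)=p_{c(n),u}\ge0$ for $u\in N_{c(n)}$, $P(n,m)=0$ if $m-n\notin N_{c(n)}$, and $\sum_{u\in N_k}p_{k,u}=1$ for every $k$. For $n\in S$, $I(n)=\{i\in\{1,\dots,M\}: n_i>0\}$, $s^+_i(n)=\sum_{u\in N_{c(n)}:u_i=1}p_{c(n),u}$ and $s^-_i(n)=\sum_{u\in N_{c(n)}:u_i=-1}p_{c(n),u}$. $R$ has negative drift if $\sup_{n\in S,\,i\in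 I(n)}\{s^+_i(n)-s^-_i(n)\}<0$. A function $F:S\to[0,\infty)$ is $C$-linear if there are real coefficients $f_{k,i}$ with $F(n)=f_{k,0}+\sum_{i=1}^M f_{k,i}n_i$ for all $n\in C_k$, $k\in K$. For $t\ge0$, $F^t(n)=\sum_{k=0}^{t-1}\sum_{m\in S}P^k(n,m)F(m)$, where $P^k$ is the $k$-step transition matrix, and the bias terms are $D^t_u(n)=F^t(n+u)-F^t(n)$ for $u\in N_{c(n)}$. *)

(* Defs.v *)
From Stdlib Require Import Reals Lra ZArith Arith List ClassicalEpsilon.
Import ListNotations.
Open Scope R_scope.

(* States n in S = N^M are lists of naturals of length M; coordinate i of the
   paper (1 <= i <= M) is list position i-1 (0-based here). *)
Definition inS (M : nat) (n : list nat) : Prop := length n = M.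

Fixpoint dirs (M : nat) : list (list Z) :=
  match M with
  | O => [[]]
  | S M' => flat_map (fun z => map (cons z) (dirs M')) [(-1)%Z; 0%Z; 1%Z]
  end.

(* n + u (for u in N(n) the result lies in S) *)
Definition addv (n : list nat) (u : list Z) : list nat :=
  map (fun p => Z.to_nat (Z.of_nat (fst p) + snd p)) (combine n u).

Definition validb (n : list nat) (u : list Z) : bool :=
  forallb (fun p => Z.leb 0 (Z.of_nat (fst p) + snd p)) (combine n u).

Definition Nset (M : nat) (n : list nat) : list (list Z) :=
  filter (validb n) (dirs M).

Definition sumR {A : Type} (l : list A) (g : A -> R) : R :=
  fold_right (fun x acc => g x + acc) 0 l.

(* One-step transition operator: (P g)(n) = sum_{u in N(n)} p_{c(n),u} g(n+u),
   i.e. sum_m P(n,m) g(m). *)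
Definition Pstep (M : nat) (c : list nat -> nat) (p : nat -> list Z -> R)
  (g : list nat -> R) (n : list nat) : R :=
  sumR (Nset M n) (fun u => p (c n) u * g (addv n u)).

Fixpoint Pk (M : nat) (c : list nat -> nat) (p : nat -> list Z -> R)
  (k : nat) (g : list nat -> R) : list nat -> R :=
  match k with
  | O => g
  | S k' => Pstep M c p (Pk M c p k' g)
  end.

Definition Pkern (M : nat) (c : list nat -> nat) (p : nat -> list Z -> R)
  (k : nat) (n m : list nat) : R :=
  Pk M c p k (fun x => if list_eq_dec Nat.eq_dec x m then 1 else 0) n.

Definition irreducible (M : nat) (c : list nat -> nat) (p : nat -> list Z -> R) : Prop :=
  forall n m, inS M n -> inS M m -> exists k, Pkern M c p k n m > 0.

(* every state has period gcd{k >= 1 : P^k(n,n) > 0} = 1 *)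
Definition aperiodic (M : nat) (c : list nat -> nat) (p : nat -> list Z -> R) : Prop :=
  forall n, inS M n ->
    forall d : nat,
      (forall k, (1 <= k)%nat -> Pkern M c p k n n > 0 -> Nat.divide d k) ->
      d = 1%nat.

(* avoid a x k = P_x(X_1 <> a, ..., X_k <> a) *)
Fixpoint avoid (M : nat) (c : list nat -> nat) (p : nat -> list Z -> R) (a : list nat) (k : nat) : list nat -> R :=
  match k with
  | O => fun _ => 1
  | S k' => fun x =>
      sumR (Nset M x) (fun u => p (c x) u *
        (if list_eq_dec Nat.eq_dec (addv x u) a then 0
         else avoid M c p a k' (addv x u)))
  end.

(* positive recurrence: E_a[tau_a] = sum_{k>=0} P_a(tau_a > k) < infinity for
   every state a (tau_a = first return time to a, k >= 1) *)
Definition positive_recurrent (M : nat) (c : list nat -> nat) (p : nat -> list Z -> R) : Prop :=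
  forall a, inS M a -> exists l, infinite_sum (fun k => avoid M c p a k a) l.

Definition splus (M : nat) (c : list nat -> nat) (p : nat -> list Z -> R) (i : nat) (n : list nat) : R :=
  sumR (Nset M n) (fun u => if Z.eq_dec (nth i u 0%Z) 1%Z then p (c n) u else 0).
Definition sminus (M : nat) (c : list nat -> nat) (p : nat -> list Z -> R) (i : nat) (n : list nat) : R :=
  sumR (Nset M n) (fun u => if Z.eq_dec (nth i u 0%Z) (-1)%Z then p (c n) u else 0).

Definition inI (n : list nat) (i : nat) : Prop := (i < length n)%nat /\ (0 < nth i n 0)%nat.

Definition drift_set_all (M : nat) (c : list nat -> nat) (p : nat -> list Z -> R) (x : R) : Prop :=
  exists n i, inS M n /\ inI n i /\ x = splus M c p i n - sminus M c p i n.

Definition drift_set (M : nat) (c : list nat -> nat) (p : nat -> list Z -> R) (i : nat) (x : R) : Prop :=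
  exists n, inS M n /\ inI n i /\ x = splus M c p i n - sminus M c p i n.

Definition negative_drift (M : nat) (c : list nat -> nat) (p : nat -> list Z -> R) : Prop :=
  exists s, is_lub (drift_set_all M c p) s /\ s < 0.

Definition Rsup (E : R -> Prop) : R :=
  epsilon (inhabits 0) (fun s => is_lub E s).

(* F is C-linear with coefficients f k i (i = 0 constant term, i = j+1 the
   coefficient of the 0-based coordinate j) *)
Definition C_linear M (c : list nat -> nat) (F : list nat -> R)
  (f : nat -> nat -> R) : Prop :=
  forall n, inS M n ->
    F n = f (c n) 0%nat + sumR (seq 0 M) (fun j => f (c n) (S j) * INR (nth j n 0%nat)).

(* f* = max_{k in K} max_{i=0..M} max{f_{k,i}, 1}, K = {0,...,nK-1} *)
Definition fstar (M nK : nat) (f : nat -> nat -> R) : R :=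
  fold_right Rmax 1
    (flat_map (fun k => map (fun i => f k i) (seq 0 (S M))) (seq 0 nK)).

Definition vcoef (M nK : nat) (c : list nat -> nat) (p : nat -> list Z -> R) (f : nat -> nat -> R) (i : nat) : R :=
  - fstar M nK f / Rsup (drift_set M c p i).

Definition Vfun (M nK : nat) (c : list nat -> nat) (p : nat -> list Z -> R) (f : nat -> nat -> R) (n : list nat) : R :=
  sumR (seq 0 M) (fun i => vcoef M nK c p f i * (INR (nth i n 0%nat))^2).

Definition Ft (M : nat) (c : list nat -> nat) (p : nat -> list Z -> R) (F : list nat -> R) (t : nat) (n : list nat) : R :=
  sumR (seq 0 t) (fun k => Pk M c p k F n).

Definition Dt (M : nat) (c : list nat -> nat) (p : nat -> list Z -> R) F t (n : list nat) (u : list Z) : R :=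
  Ft M c p F t (addv n u) - Ft M c p F t n.

(* Main.v *)
Require Import Defs.
From Stdlib Require Import Reals Lra Lia ZArith List FunctionalExtensionality ClassicalEpsilon.
Import ListNotations.
Open Scope R_scope.

Lemma sumR_nil {A} (g : A -> R) : sumR [] g = 0.
Proof. reflexivity. Qed.
Lemma sumR_cons {A} (a : A) l (g : A -> R) : sumR (a :: l) g = g a + sumR l g.
Proof. reflexivity. Qed.
Lemma sumR_plus {A} (l : list A) f g :
  sumR l (fun x => f x + g x) = sumR l f + sumR l g.
Proof. induction l; simpl; [lra|rewrite IHl; lra]. Qed.
Lemma sumR_minus {A} (l : list A) f g :
  sumR l (fun x => f x - g x) = sumR l f - sumR l g.
Proof. induction l; simpl; [lra|rewrite IHl; lra]. Qed.
Lemma sumR_scal_l {A} (l : list A) a f :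
  sumR l (fun x => a * f x) = a * sumR l f.
Proof. induction l; simpl; [lra|rewrite IHl; lra]. Qed.
Lemma sumR_scal_r {A} (l : list A) a f :
  sumR l (fun x => f x * a) = sumR l f * a.
Proof. induction l; simpl; [lra|rewrite IHl; lra]. Qed.
Lemma sumR_ext_in {A} (l : list A) f g :
  (forall x, In x l -> f x = g x) -> sumR l f = sumR l g.
Proof. induction l; simpl; intros H; [lra|]. rewrite H, IHl; auto. Qed.
Lemma sumR_le_in {A} (l : list A) f g :
  (forall x, In x l -> f x <= g x) -> sumR l f <= sumR l g.
Proof. induction l; simpl; intros H; [lra|].
  specialize (IHl (fun x Hx => H x (or_intror Hx))). specialize (H a (or_introl eq_refl)). lra. Qed.
Lemma sumR_nonneg {A} (l : list A) f :
  (forall x, In x l -> 0 <= f x) -> 0 <= sumR l f.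
Proof. intros H. assert (E: sumR l (fun _ => 0) = 0) by (clear H; induction l; simpl; [lra|rewrite IHl; lra]).
  rewrite <- E. apply sumR_le_in. auto. Qed.
Lemma sumR_app {A} (l1 l2 : list A) f : sumR (l1 ++ l2) f = sumR l1 f + sumR l2 f.
Proof. induction l1; simpl; [lra|rewrite IHl1; lra]. Qed.
Lemma sumR_map {A B} (h : A -> B) l f : sumR (map h l) f = sumR l (fun x => f (h x)).
Proof. induction l; simpl; [lra|rewrite IHl; lra]. Qed.
Lemma sumR_const {A} (l : list A) a : sumR l (fun _ => a) = INR (length l) * a.
Proof. induction l; simpl length; [simpl; lra|]. rewrite sumR_cons, IHl, S_INR. lra. Qed.
Lemma sumR_swap {A B} (l1 : list A) (l2 : list B) (f : A -> B -> R) :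
  sumR l1 (fun a => sumR l2 (fun b => f a b)) = sumR l2 (fun b => sumR l1 (fun a => f a b)).
Proof. induction l1; simpl.
  - induction l2; simpl; [lra|rewrite <- IHl2; lra].
  - rewrite IHl1, <- sumR_plus. reflexivity. Qed.
Lemma sumR_ge_term {A} (l : list A) f a :
  (forall x, In x l -> 0 <= f x) -> In a l -> f a <= sumR l f.
Proof. induction l; simpl; intros H Ha; [contradiction|].
  destruct Ha as [<-|Ha].
  - assert (0 <= sumR l f) by (apply sumR_nonneg; auto). lra.
  - assert (f a0 >= 0) by (apply Rle_ge; auto). specialize (IHl (fun x Hx => H x (or_intror Hx)) Ha). lra. Qed.
Lemma sumR_seq_S f t : sumR (seq 0 (S t)) f = sumR (seq 0 t) f + f t.
Proof. rewrite seq_S, sumR_app. simpl. lra. Qed.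
Lemma sumR_seq_S' f t : sumR (seq 0 (S t)) f = f O + sumR (seq 0 t) (fun k => f (S k)).
Proof. simpl. rewrite <- seq_shift, sumR_map. reflexivity. Qed.

Lemma dirs_prop M u : In u (dirs M) ->
  length u = M /\ forall i, nth i u 0%Z = (-1)%Z \/ nth i u 0%Z = 0%Z \/ nth i u 0%Z = 1%Z.
Proof.
  revert u; induction M; simpl; intros u H.
  - destruct H as [<-|[]]. split; auto. intros [|i]; simpl; auto.
  - apply in_app_or in H.
    assert (Hc : forall z, (z = -1 \/ z = 0 \/ z = 1)%Z -> In u (map (cons z) (dirs M)) ->
       length u = S M /\ forall i, nth i u 0%Z = (-1)%Z \/ nth i u 0%Z = 0%Z \/ nth i u 0%Z = 1%Z).
    { intros z Hz Hu. apply in_map_iff in Hu. destruct Hu as [u' [<- Hu']].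
      destruct (IHM u' Hu') as [L N]. split; [simpl; auto|].
      intros [|i]; simpl; auto. }
    destruct H as [H|H]; [apply (Hc (-1)%Z); auto|].
    apply in_app_or in H. destruct H as [H|H]; [apply (Hc 0%Z); auto|].
    apply in_app_or in H. destruct H as [H|H]; [apply (Hc 1%Z); auto|]. destruct H.
Qed.

Lemma Nset_prop M n u : length n = M -> In u (Nset M n) ->
  length u = M /\
  (forall i, nth i u 0%Z = (-1)%Z \/ nth i u 0%Z = 0%Z \/ nth i u 0%Z = 1%Z) /\
  (forall i, (i < M)%nat -> (0 <= Z.of_nat (nth i n 0%nat) + nth i u 0%Z)%Z).
Proof.
  intros Hn H. unfold Nset in H. apply filter_In in H. destruct H as [H1 H2].
  destruct (dirs_prop M u H1) as [L N]. split; [auto|split; [auto|]].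
  intros i Hi. unfold validb in H2. rewrite forallb_forall in H2.
  assert (HI : In (nth i n 0%nat, nth i u 0%Z) (combine n u)).
  { rewrite <- combine_nth by lia. apply nth_In. rewrite length_combine. lia. }
  specialize (H2 _ HI). simpl in H2. lia.
Qed.

Lemma addv_length n u : length n = length u -> length (addv n u) = length n.
Proof. intros H. unfold addv. rewrite length_map, length_combine. lia. Qed.

Lemma addv_nth n u i : length n = length u -> (i < length n)%nat ->
  nth i (addv n u) 0%nat = Z.to_nat (Z.of_nat (nth i n 0%nat) + nth i u 0%Z).
Proof.
  intros H Hi. unfold addv.
  set (g := fun p : nat * Z => Z.to_nat (Z.of_nat (fst p) + snd p)).
  transitivity (g (nth i (combine n u) (0%nat, 0%Z))).
  { rewrite (nth_indep _ 0%nat (g (0%nat,0%Z))) by (rewrite length_map, length_combine; lia).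
    apply map_nth. }
  rewrite combine_nth by auto. reflexivity.
Qed.

Lemma addv_inS M n u : length n = M -> In u (Nset M n) -> length (addv n u) = M.
Proof. intros Hn Hu. destruct (Nset_prop M n u Hn Hu) as [L _].
  rewrite addv_length; lia. Qed.

Lemma addv_INR M n u i : length n = M -> In u (Nset M n) -> (i < M)%nat ->
  INR (nth i (addv n u) 0%nat) = INR (nth i n 0%nat) + IZR (nth i u 0%Z).
Proof.
  intros Hn Hu Hi. destruct (Nset_prop M n u Hn Hu) as [L [_ V]].
  rewrite addv_nth by lia. rewrite INR_IZR_INZ, Z2Nat.id by (apply V; auto).
  rewrite plus_IZR, <- INR_IZR_INZ. reflexivity.
Qed.

Section Ops.
Variable M : nat.
Variable c : list nat -> nat.
Variable p : nat -> list Z -> R.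
Hypothesis Hp0 : forall n u, inS M n -> In u (Nset M n) -> 0 <= p (c n) u.
Hypothesis Hp1 : forall n, inS M n -> sumR (Nset M n) (fun u => p (c n) u) = 1.

Definition z0 : list nat := repeat 0%nat M.
Lemma z0_inS : inS M z0.
Proof. unfold inS, z0. apply repeat_length. Qed.

Definition ind0 (x : list nat) : R := if list_eq_dec Nat.eq_dec x z0 then 1 else 0.
Definition one1 (x : list nat) : R := 1.

Definition Qs (g : list nat -> R) (n : list nat) : R :=
  sumR (Nset M n) (fun u => p (c n) u *
    (if list_eq_dec Nat.eq_dec (addv n u) z0 then 0 else g (addv n u))).
Fixpoint Qk (k : nat) (g : list nat -> R) : list nat -> R :=
  match k with O => g | S k' => Qs (Qk k' g) end.
Definition rho := Pstep M c p ind0.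

Lemma Pstep_plus g h n : Pstep M c p (fun x => g x + h x) n = Pstep M c p g n + Pstep M c p h n.
Proof. unfold Pstep. rewrite <- sumR_plus. apply sumR_ext_in. intros; lra. Qed.
Lemma Pstep_scal a g n : Pstep M c p (fun x => a * g x) n = a * Pstep M c p g n.
Proof. unfold Pstep. rewrite <- sumR_scal_l. apply sumR_ext_in. intros; lra. Qed.
Lemma Pstep_const a n : inS M n -> Pstep M c p (fun _ => a) n = a.
Proof. intros H. unfold Pstep. rewrite sumR_scal_r, Hp1 by auto. lra. Qed.
Lemma Pstep_le g h n : inS M n -> (forall x, inS M x -> g x <= h x) ->
  Pstep M c p g n <= Pstep M c p h n.
Proof. intros Hn H. unfold Pstep. apply sumR_le_in. intros u Hu.
  apply Rmult_le_compat_l; [auto|]. apply H. apply (addv_inS M); auto. Qed.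
Lemma Pstep_nonneg g n : inS M n -> (forall x, inS M x -> 0 <= g x) -> 0 <= Pstep M c p g n.
Proof. intros Hn H. rewrite <- (Pstep_const 0 n Hn). apply Pstep_le; auto. Qed.
Lemma Pstep_sumR {A} (l : list A) (G : A -> list nat -> R) n :
  Pstep M c p (fun x => sumR l (fun a => G a x)) n = sumR l (fun a => Pstep M c p (G a) n).
Proof. induction l; simpl.
  - unfold Pstep. rewrite (sumR_ext_in _ _ (fun _ => 0)) by (intros; lra).
    induction (Nset M n); simpl; lra.
  - rewrite Pstep_plus, IHl. reflexivity. Qed.

Lemma Qs_plus g h n : Qs (fun x => g x + h x) n = Qs g n + Qs h n.
Proof. unfold Qs. rewrite <- sumR_plus. apply sumR_ext_in. intros.
  destruct list_eq_dec; lra. Qed.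
Lemma Qs_scal a g n : Qs (fun x => a * g x) n = a * Qs g n.
Proof. unfold Qs. rewrite <- sumR_scal_l. apply sumR_ext_in. intros.
  destruct list_eq_dec; lra. Qed.
Lemma Qs_const a n : Qs (fun _ => a) n = a * Qs one1 n.
Proof. rewrite <- Qs_scal. unfold one1. f_equal. apply functional_extensionality; intros; lra. Qed.
Lemma Qs_le g h n : inS M n -> (forall x, inS M x -> g x <= h x) -> Qs g n <= Qs h n.
Proof. intros Hn H. unfold Qs. apply sumR_le_in. intros u Hu.
  apply Rmult_le_compat_l; [auto|]. destruct list_eq_dec; [lra|].
  apply H. apply (addv_inS M); auto. Qed.
Lemma Qs_sumR {A} (l : list A) (G : A -> list nat -> R) n :
  Qs (fun x => sumR l (fun a => G a x)) n = sumR l (fun a => Qs (G a) n).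
Proof. induction l; simpl.
  - unfold Qs. rewrite (sumR_ext_in _ _ (fun _ => 0)) by (intros; destruct list_eq_dec; lra).
    induction (Nset M n); simpl; lra.
  - rewrite Qs_plus, IHl. reflexivity. Qed.

Lemma P_split g n : Pstep M c p g n = Qs g n + rho n * g z0.
Proof. unfold rho, Pstep, Qs, ind0. rewrite <- sumR_scal_r, <- sumR_plus. apply sumR_ext_in.
  intros u _. destruct list_eq_dec as [e|e]; [rewrite e|]; lra. Qed.

Lemma rho_nonneg n : inS M n -> 0 <= rho n.
Proof. intros Hn. apply Pstep_nonneg; auto. intros x _. unfold ind0. destruct list_eq_dec; lra. Qed.
Lemma Qs_one n : inS M n -> Qs one1 n = 1 - rho n.
Proof. intros Hn. pose proof (P_split one1 n). unfold one1 in *. rewrite (Pstep_const 1 n Hn) in H.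
  lra. Qed.
Lemma Qs_nonneg g n : inS M n -> (forall x, inS M x -> 0 <= g x) -> 0 <= Qs g n.
Proof. intros Hn H. unfold Qs. apply sumR_nonneg. intros u Hu.
  apply Rmult_le_pos; [auto|]. destruct list_eq_dec; [lra|]. apply H, (addv_inS M); auto. Qed.
Lemma rho_le1 n : inS M n -> rho n <= 1.
Proof. intros Hn. pose proof (Qs_one n Hn). pose proof (Qs_nonneg one1 n Hn).
  unfold one1 in *. assert (0 <= Qs (fun _ => 1) n) by (apply H0; intros; lra). lra. Qed.
Lemma Qs_le_P g n : inS M n -> (forall x, inS M x -> 0 <= g x) -> Qs g n <= Pstep M c p g n.
Proof. intros Hn H. rewrite P_split. pose proof (rho_nonneg n Hn).
  pose proof (H z0 z0_inS). nra. Qed.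

Lemma Qk_one_bounds k n : inS M n -> 0 <= Qk k one1 n <= 1.
Proof. revert n; induction k; intros n Hn; simpl.
  - unfold one1; lra.
  - split. apply Qs_nonneg; auto. intros; apply IHk; auto.
    apply Rle_trans with (Qs one1 n). apply Qs_le; auto. intros; apply IHk; auto.
    rewrite Qs_one by auto. pose proof (rho_nonneg n Hn). lra.
Qed.

Lemma Qk_one_anti k n : inS M n -> Qk (S k) one1 n <= Qk k one1 n.
Proof. revert n; induction k; intros n Hn.
  - simpl. rewrite Qs_one by auto. pose proof (rho_nonneg n Hn). unfold one1; lra.
  - change (Qs (Qk (S k) one1) n <= Qs (Qk k one1) n). apply Qs_le; auto. Qed.

Lemma Qk_one_anti_le k N n : inS M n -> (k <= N)%nat -> Qk N one1 n <= Qk k one1 n.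
Proof. intros Hn H. induction H; [lra|]. pose proof (Qk_one_anti m n Hn). lra. Qed.

End Ops.

Fixpoint boxl (L m : nat) : list (list nat) :=
  match m with
  | O => [[]]
  | S m' => flat_map (fun a => map (cons a) (boxl L m')) (seq 0 (S L))
  end.
Definition inB (L : nat) (n : list nat) : bool := forallb (fun x => Nat.leb x L) n.

Lemma boxl_complete L n : inB L n = true -> In n (boxl L (length n)).
Proof. induction n as [|a n IH]; intros H; [simpl; auto|].
  unfold inB in H; simpl in H; fold (inB L n) in H.
  apply Bool.andb_true_iff in H. destruct H as [H1 H2].
  change (In (a :: n) (flat_map (fun a0 => map (cons a0) (boxl L (length n))) (seq 0 (S L)))).
  apply in_flat_map.
  exists a. split. apply in_seq. apply Nat.leb_le in H1. lia.
  apply in_map. auto. Qed.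

Section Box.
Variable M : nat.
Variable c : list nat -> nat.
Variable p : nat -> list Z -> R.
Hypothesis Hp0 : forall n u, inS M n -> In u (Nset M n) -> 0 <= p (c n) u.
Hypothesis Hp1 : forall n, inS M n -> sumR (Nset M n) (fun u => p (c n) u) = 1.
Hypothesis Hirr : irreducible M c p.
Hypothesis Hrec : positive_recurrent M c p.

Lemma avoid_Qk k x : avoid M c p (z0 M) k x = Qk M c p k one1 x.
Proof. revert x; induction k; intros x; [reflexivity|].
  simpl. assert (E : avoid M c p (z0 M) k = Qk M c p k one1) by (apply functional_extensionality; auto).
  rewrite <- E. reflexivity. Qed.

Lemma Pk_ind_bound k n : inS M n -> Pk M c p (S k) (ind0 M) n <= 1 - Qk M c p (S k) one1 n.
Proof. revert n; induction k; intros n Hn.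
  - simpl. rewrite (Qs_one M c p Hp1 n Hn). unfold rho. lra.
  - change (Pstep M c p (Pk M c p (S k) (ind0 M)) n <= 1 - Qs M c p (Qk M c p (S k) one1) n).
    apply Rle_trans with (Pstep M c p (fun x => 1 + (-1) * Qk M c p (S k) one1 x) n).
    + apply (Pstep_le M c p Hp0); auto. intros; specialize (IHk x H). lra.
    + rewrite Pstep_plus, Pstep_scal, (Pstep_const M c p Hp1) by auto.
      assert (Qs M c p (Qk M c p (S k) one1) n <= Pstep M c p (Qk M c p (S k) one1) n).
      { apply (Qs_le_P M c p Hp0 Hp1); auto. intros; apply (Qk_one_bounds M c p Hp0 Hp1); auto. }
      lra.
Qed.

Lemma exists_k_lt1 b : inS M b -> exists k, Qk M c p k one1 b < 1.
Proof. intros Hb. destruct (list_eq_dec Nat.eq_dec b (z0 M)) as [e|e].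
  - subst b. destruct (Hrec (z0 M) (z0_inS M)) as [l Hl].
    destruct (Hl (1/2)) as [N HN]; [lra|].
    pose proof (HN N (le_n _)). pose proof (HN (S N) (le_S _ _ (le_n _))).
    set (s := fun k => avoid M c p (z0 M) k (z0 M)) in *.
    change (sum_f_R0 s (S N)) with (sum_f_R0 s N + s (S N)) in H0.
    unfold Rdist in *. exists (S N). rewrite <- avoid_Qk. fold (s (S N)).
    apply Rabs_def2 in H, H0. lra.
  - destruct (Hirr b (z0 M) Hb (z0_inS M)) as [k Hk]. destruct k.
    + unfold Pkern in Hk. simpl in Hk. destruct list_eq_dec; [contradiction|lra].
    + exists (S k). pose proof (Pk_ind_bound k b Hb). unfold Pkern in Hk.
      change (Pk M c p (S k) (ind0 M) b > 0) in Hk. lra.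
Qed.

Lemma finite_unif (l : list (list nat)) :
  exists N d, 0 < d /\ forall b, In b l -> inS M b -> Qk M c p N one1 b <= 1 - d.
Proof. induction l as [|b l IH].
  - exists O, 1. split; [lra|]. intros b [].
  - destruct IH as [N [d [Hd H]]].
    destruct (Nat.eq_dec (length b) M) as [e|e].
    + destruct (exists_k_lt1 b e) as [k Hk].
      exists (Nat.max k N), (Rmin (1 - Qk M c p k one1 b) d). split.
      { apply Rmin_pos; lra. }
      intros b' [E|Hb'] Hs.
      * subst b'. pose proof (Qk_one_anti_le M c p Hp0 Hp1 k (Nat.max k N) b Hs (Nat.le_max_l _ _)).
        pose proof (Rmin_l (1 - Qk M c p k one1 b) d). lra.
      * pose proof (Qk_one_anti_le M c p Hp0 Hp1 N (Nat.max k N) b' Hs (Nat.le_max_r _ _)).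
        pose proof (Rmin_r (1 - Qk M c p k one1 b) d). specialize (H b' Hb' Hs). lra.
    + exists N, d. split; auto. intros b' [E|Hb'] Hs; [subst; contradiction|auto].
Qed.

Lemma box_unif L : exists N d, 0 < d /\ forall b, inS M b -> inB L b = true -> Qk M c p N one1 b <= 1 - d.
Proof. destruct (finite_unif (boxl L M)) as [N [d [Hd H]]]. exists N, d. split; auto.
  intros b Hs HB. apply H; auto. rewrite <- Hs. apply boxl_complete; auto. Qed.
End Box.

Definition nrm (M : nat) (n : list nat) : R := sumR (seq 0 M) (fun i => INR (nth i n 0%nat)).

Lemma forallb_false {A} (f : A -> bool) l : forallb f l = false -> exists x, In x l /\ f x = false.
Proof. induction l; simpl; intros H; [discriminate|].
  destruct (f a) eqn:E; simpl in H.
  - destruct (IHl H) as [x [Hx Hf]]. eauto.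
  - eauto. Qed.

Lemma nrm_out M L n : inS M n -> inB L n = false -> INR L < nrm M n.
Proof. intros Hn H. apply forallb_false in H. destruct H as [x [Hx Hf]].
  apply Nat.leb_gt in Hf. apply (In_nth _ _ 0%nat) in Hx. destruct Hx as [i [Hi Hxi]].
  unfold nrm. apply Rlt_le_trans with (INR (nth i n 0%nat)).
  - rewrite Hxi. apply lt_INR. auto.
  - apply (sumR_ge_term _ (fun i => INR (nth i n 0%nat))).
    + intros; apply pos_INR.
    + apply in_seq. unfold inS in Hn. lia.
Qed.

Section Main.
Variable M : nat.
Variable c : list nat -> nat.
Variable p : nat -> list Z -> R.
Hypothesis Hp0 : forall n u, inS M n -> In u (Nset M n) -> 0 <= p (c n) u.
Hypothesis Hp1 : forall n, inS M n -> sumR (Nset M n) (fun u => p (c n) u) = 1.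
Hypothesis Hirr : irreducible M c p.
Hypothesis Hrec : positive_recurrent M c p.
Variable F V : list nat -> R.
Variable fs s : R.
Hypothesis HF0 : forall n, inS M n -> 0 <= F n.
Hypothesis HFb : forall n, inS M n -> F n <= fs * (1 + nrm M n).
Hypothesis HV0 : forall n, inS M n -> 0 <= V n.
Hypothesis HVd : forall n, inS M n -> Pstep M c p V n <= V n - 2 * fs * nrm M n + s.
Hypothesis Hfs : 0 < fs.
Hypothesis Hs : 0 <= s.

Notation Q := (Qs M c p).

Lemma nrm_nonneg n : 0 <= nrm M n.
Proof. apply sumR_nonneg. intros; apply pos_INR. Qed.

Lemma Lyap K : 0 <= K -> exists W bW,
  (forall n, inS M n -> 0 <= W n /\ W n <= V n + bW) /\
  (forall n, inS M n -> F n + K <= W n - Q W n).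
Proof.
  intros HK.
  destruct (INR_archimed 1 ((s + fs + K) / fs)) as [L HL]; [lra|].
  rewrite Rmult_1_r in HL.
  destruct (box_unif M c p Hp0 Hp1 Hirr Hrec L) as [N [d [Hd Hbox]]].
  set (C := s + fs + K).
  set (Phi := fun x => sumR (seq 0 N) (fun k => Qk M c p k one1 x)).
  assert (HPhi : forall x, inS M x -> 0 <= Phi x <= INR N).
  { intros x Hx. split.
    - apply sumR_nonneg. intros; apply (Qk_one_bounds M c p Hp0 Hp1); auto.
    - unfold Phi. apply Rle_trans with (sumR (seq 0 N) (fun _ => 1)).
      + apply sumR_le_in. intros; apply (Qk_one_bounds M c p Hp0 Hp1); auto.
      + rewrite sumR_const, length_seq. lra. }
  assert (HQPhi : forall x, Phi x - Q Phi x = 1 - Qk M c p N one1 x).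
  { intros x. unfold Phi. rewrite Qs_sumR.
    pose proof (sumR_seq_S (fun k => Qk M c p k one1 x) N) as E1.
    pose proof (sumR_seq_S' (fun k => Qk M c p k one1 x) N) as E2.
    cbv beta in E1, E2.
    assert (E0 : Qk M c p 0 one1 x = 1) by reflexivity.
    assert (E3 : sumR (seq 0 N) (fun a => Q (fun x0 => Qk M c p a one1 x0) x) =
                 sumR (seq 0 N) (fun k => Qk M c p (S k) one1 x)) by reflexivity.
    rewrite E3. lra. }
  assert (HCd : 0 <= C / d) by (unfold C; apply Rmult_le_pos; [lra|]; left; apply Rinv_0_lt_compat; lra).
  exists (fun x => V x + C / d * Phi x), (C / d * INR N). split.
  - intros n Hn. destruct (HPhi n Hn). pose proof (HV0 n Hn). split; [nra|].
    apply Rplus_le_compat_l. apply Rmult_le_compat_l; lra.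
  - intros n Hn. rewrite Qs_plus, Qs_scal.
    assert (HQV : Q V n <= Pstep M c p V n) by (apply (Qs_le_P M c p Hp0 Hp1); auto).
    pose proof (HVd n Hn). pose proof (HFb n Hn). pose proof (HQPhi n).
    pose proof (nrm_nonneg n).
    assert (E : V n + C / d * Phi n - (Q V n + C / d * Q Phi n) =
               (V n - Q V n) + C / d * (1 - Qk M c p N one1 n)) by (rewrite <- H1; ring).
    rewrite E. clear E.
    destruct (inB L n) eqn:EB.
    + specialize (Hbox n Hn EB).
      assert (C <= C / d * (1 - Qk M c p N one1 n)).
      { apply Rle_trans with (C / d * d). right; field; lra.
        apply Rmult_le_compat_l; lra. }
      unfold C in *. nra.
    + pose proof (nrm_out M L n Hn EB).
      assert (0 <= C / d * (1 - Qk M c p N one1 n)).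
      { apply Rmult_le_pos; auto. pose proof (Qk_one_bounds M c p Hp0 Hp1 N n Hn). lra. }
      assert (fs * nrm M n >= s + fs + K).
      { assert ((s + fs + K) / fs * fs = s + fs + K) by (field; lra).
        assert ((s + fs + K) / fs < nrm M n) by lra. nra. }
      unfold C in *. nra.
Qed.

Definition At t x := sumR (seq 0 t) (fun k => Qk M c p k F x).

Lemma At_rec t x : At (S t) x = F x + Q (At t) x.
Proof. unfold At. rewrite sumR_seq_S'. simpl. f_equal. unfold At. rewrite Qs_sumR. reflexivity. Qed.

Lemma Qk_nonneg g k n : inS M n -> (forall x, inS M x -> 0 <= g x) -> 0 <= Qk M c p k g n.
Proof. intros Hn Hg. revert n Hn. induction k; intros n Hn; simpl; auto.
  apply (Qs_nonneg M c p Hp0); auto. Qed.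

Lemma At_le W : (forall n, inS M n -> 0 <= W n) -> (forall n, inS M n -> F n <= W n - Q W n) ->
  forall t n, inS M n -> At t n <= W n.
Proof. intros H0 H1 t. induction t; intros n Hn.
  - unfold At. simpl. auto.
  - rewrite At_rec. assert (Q (At t) n <= Q W n) by (apply (Qs_le M c p Hp0); auto).
    specialize (H1 n Hn). lra. Qed.

Lemma Pk_le_At t n : inS M n -> Pk M c p t F n <= Qk M c p t F n + At t (z0 M).
Proof. revert n. induction t; intros n Hn.
  - unfold At; simpl; lra.
  - change (Pstep M c p (Pk M c p t F) n <= Q (Qk M c p t F) n + At (S t) (z0 M)).
    apply Rle_trans with (Pstep M c p (fun x => Qk M c p t F x + At t (z0 M)) n).
    + apply (Pstep_le M c p Hp0); auto.
    + rewrite Pstep_plus, (Pstep_const M c p Hp1) by auto. rewrite P_split.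
      unfold At at 2. rewrite sumR_seq_S. fold (At t (z0 M)).
      pose proof (rho_le1 M c p Hp0 Hp1 n Hn). pose proof (rho_nonneg M c p Hp0 Hp1 n Hn).
      pose proof (Qk_nonneg F t (z0 M) (z0_inS M) HF0). nra.
Qed.

Lemma Pk_nonneg t n : inS M n -> 0 <= Pk M c p t F n.
Proof. revert n; induction t; intros n Hn; simpl; auto. apply (Pstep_nonneg M c p Hp0 Hp1); auto. Qed.

Lemma Ft_rec t n : Ft M c p F (S t) n = F n + Pstep M c p (Ft M c p F t) n.
Proof. unfold Ft. rewrite sumR_seq_S'. simpl. f_equal. rewrite Pstep_sumR. reflexivity. Qed.
Lemma Ft_rec2 t n : Ft M c p F (S t) n = Ft M c p F t n + Pk M c p t F n.
Proof. unfold Ft. rewrite sumR_seq_S. reflexivity. Qed.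

Lemma main_ind G K : (forall n, inS M n -> 0 <= G n) ->
  (forall n, inS M n -> F n + K <= G n - Q G n) ->
  (forall t, Pk M c p t F (z0 M) <= K) ->
  forall t n, inS M n -> Rabs (Ft M c p F t n - Ft M c p F t (z0 M)) <= G n.
Proof.
  intros HG0 HG HK t. induction t; intros n Hn.
  - unfold Ft. simpl. rewrite Rminus_0_r, Rabs_R0. auto.
  - assert (IH : forall x, inS M x -> Ft M c p F t (z0 M) - G x <= Ft M c p F t x <= Ft M c p F t (z0 M) + G x).
    { intros x Hx. specialize (IHt x Hx).
      pose proof (Rle_abs (Ft M c p F t x - Ft M c p F t (z0 M))).
      pose proof (Rle_abs (-(Ft M c p F t x - Ft M c p F t (z0 M)))). rewrite Rabs_Ropp in H0. lra. }
    set (a := Ft M c p F t (z0 M)) in *.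
    rewrite Ft_rec, P_split. rewrite (Ft_rec2 t (z0 M)). fold a.
    pose proof (Pk_nonneg t (z0 M) (z0_inS M)). pose proof (HK t).
    pose proof (HG n Hn). pose proof (HF0 n Hn).
    pose proof (Qs_one M c p Hp1 n Hn).
    assert (U : Q (Ft M c p F t) n <= a * Q one1 n + Q G n).
    { rewrite <- Qs_const, <- Qs_plus. apply (Qs_le M c p Hp0); auto. intros x Hx; apply IH; auto. }
    assert (Lo : a * Q one1 n - Q G n <= Q (Ft M c p F t) n).
    { replace (a * Q one1 n - Q G n) with (a * Q one1 n + (-1) * Q G n) by ring.
      rewrite <- (Qs_scal M c p (-1) G n), <- Qs_const, <- Qs_plus. apply (Qs_le M c p Hp0); auto.
      intros x Hx; specialize (IH x Hx); lra. }
    apply Rabs_le. rewrite H3 in U, Lo. split; nra.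
Qed.

Lemma final_abstract : exists b0, forall n u t, inS M n -> In u (Nset M n) ->
  Rabs (Dt M c p F t n u) <= V n + V (addv n u) + b0.
Proof.
  destruct (Lyap 0 (Rle_refl 0)) as [W1 [b1 [Hb1 Hq1]]].
  set (K := W1 (z0 M)).
  assert (HK : forall t, Pk M c p t F (z0 M) <= K).
  { intros t. pose proof (Pk_le_At t (z0 M) (z0_inS M)).
    assert (E : At (S t) (z0 M) = At t (z0 M) + Qk M c p t F (z0 M)) by (unfold At; apply sumR_seq_S).
    pose proof (At_le W1 (fun n Hn => proj1 (Hb1 n Hn)) (fun n Hn => ltac:(specialize (Hq1 n Hn); lra))
      (S t) (z0 M) (z0_inS M)). unfold K. lra. }
  assert (HK0 : 0 <= K) by (apply (Hb1 (z0 M) (z0_inS M))).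
  destruct (Lyap K HK0) as [W [bW [Hb Hq]]].
  exists (2 * bW). intros n u t Hn Hu.
  assert (Hnu : inS M (addv n u)) by (apply (addv_inS M); auto).
  pose proof (main_ind W K (fun n Hn => proj1 (Hb n Hn)) Hq HK t n Hn).
  pose proof (main_ind W K (fun n Hn => proj1 (Hb n Hn)) Hq HK t (addv n u) Hnu).
  unfold Dt.
  replace (Ft M c p F t (addv n u) - Ft M c p F t n) with
    ((Ft M c p F t (addv n u) - Ft M c p F t (z0 M)) - (Ft M c p F t n - Ft M c p F t (z0 M))) by ring.
  eapply Rle_trans; [apply Rabs_triang|]. rewrite Rabs_Ropp.
  destruct (Hb n Hn), (Hb (addv n u) Hnu). lra.
Qed.

End Main.

Lemma fr_ge_init l : 1 <= fold_right Rmax 1 l.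
Proof. induction l; simpl; [lra|]. eapply Rle_trans; [apply IHl|apply Rmax_r]. Qed.
Lemma fr_ge_mem l x : In x l -> x <= fold_right Rmax 1 l.
Proof. induction l; simpl; intros H; [contradiction|]. destruct H as [<-|H].
  - apply Rmax_l. - eapply Rle_trans; [apply IHl; auto|apply Rmax_r]. Qed.

Lemma fstar_ge1 M nK f : 1 <= fstar M nK f.
Proof. apply fr_ge_init. Qed.
Lemma fstar_ge M nK f k i : (k < nK)%nat -> (i <= M)%nat -> f k i <= fstar M nK f.
Proof. intros Hk Hi. apply fr_ge_mem. apply in_flat_map. exists k. split.
  - apply in_seq; lia. - apply in_map_iff. exists i. split; auto. apply in_seq; lia. Qed.

Lemma Rsup_spec E : (exists x, E x) -> bound E -> is_lub E (Rsup E).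
Proof. intros Hne Hb. unfold Rsup. apply epsilon_spec.
  destruct (completeness E Hb Hne) as [m Hm]. eauto. Qed.

Section VF.
Variable M nK : nat.
Variable c : list nat -> nat.
Variable p : nat -> list Z -> R.
Variable f : nat -> nat -> R.
Hypothesis Hp0 : forall n u, inS M n -> In u (Nset M n) -> 0 <= p (c n) u.
Hypothesis Hp1 : forall n, inS M n -> sumR (Nset M n) (fun u => p (c n) u) = 1.
Hypothesis Hdrift : negative_drift M c p.

Let fs := fstar M nK f.
Let v := vcoef M nK c p f.

Lemma sigma_spec i : (i < M)%nat ->
  is_lub (drift_set M c p i) (Rsup (drift_set M c p i)) /\ Rsup (drift_set M c p i) < 0.
Proof.
  intros Hi. destruct Hdrift as [s0 [[Hub Hl] Hs0]].
  assert (Hub' : is_upper_bound (drift_set M c p i) s0).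
  { intros x [n [Hn [HI E]]]. apply Hub. exists n, i. auto. }
  assert (H : is_lub (drift_set M c p i) (Rsup (drift_set M c p i))).
  { apply Rsup_spec; [|exists s0; auto].
    exists (splus M c p i (repeat 1%nat M) - sminus M c p i (repeat 1%nat M)).
    exists (repeat 1%nat M). split; [apply repeat_length|]. split; [|reflexivity].
    split; [rewrite repeat_length; auto|]. rewrite nth_repeat_lt by auto. lia. }
  split; auto. destruct H as [_ H]. specialize (H s0 Hub'). lra.
Qed.

Lemma v_pos i : (i < M)%nat -> 0 < v i.
Proof. intros Hi. destruct (sigma_spec i Hi) as [_ H]. unfold v, vcoef.
  pose proof (fstar_ge1 M nK f).
  replace (- fstar M nK f / Rsup (drift_set M c p i)) with
    (fstar M nK f * / (- Rsup (drift_set M c p i))) by (field; lra).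
  apply Rmult_lt_0_compat; [lra|]. apply Rinv_0_lt_compat. lra. Qed.

Lemma V_nonneg n : 0 <= Vfun M nK c p f n.
Proof. unfold Vfun. apply sumR_nonneg. intros i Hi. apply in_seq in Hi.
  pose proof (v_pos i ltac:(lia)). fold v. apply Rmult_le_pos; [lra|]. apply pow2_ge_0. Qed.

Lemma s_nonneg : 0 <= sumR (seq 0 M) v.
Proof. apply sumR_nonneg. intros i Hi. apply in_seq in Hi. pose proof (v_pos i ltac:(lia)). lra. Qed.

Lemma mean_inc n i : inS M n ->
  sumR (Nset M n) (fun u => p (c n) u * IZR (nth i u 0%Z)) = splus M c p i n - sminus M c p i n.
Proof. intros Hn. unfold splus, sminus. rewrite <- sumR_minus. apply sumR_ext_in.
  intros u Hu. destruct (Nset_prop M n u Hn Hu) as [_ [H _]].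
  destruct (H i) as [E|[E|E]]; rewrite E;
  repeat (destruct Z.eq_dec; try discriminate; try congruence); lra. Qed.

Lemma drift_i n i : inS M n -> (i < M)%nat ->
  sumR (Nset M n) (fun u => p (c n) u * (v i * INR (nth i (addv n u) 0%nat) ^ 2))
  <= v i * INR (nth i n 0%nat) ^ 2 + (-2 * fs) * INR (nth i n 0%nat) + v i.
Proof.
  intros Hn Hi. set (x := INR (nth i n 0%nat)). pose proof (v_pos i Hi) as Hv.
  apply Rle_trans with (sumR (Nset M n) (fun u => (v i * x ^ 2) * p (c n) u +
      (2 * v i * x) * (p (c n) u * IZR (nth i u 0%Z)) + v i * p (c n) u)).
  { apply sumR_le_in. intros u Hu. rewrite (addv_INR M) by auto. fold x.
    destruct (Nset_prop M n u Hn Hu) as [_ [H _]]. pose proof (Hp0 n u Hn Hu).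
    assert (IZR (nth i u 0%Z) ^ 2 <= 1) by (destruct (H i) as [E|[E|E]]; rewrite E; simpl; lra).
    assert (0 <= p (c n) u * v i) by (apply Rmult_le_pos; lra). nra. }
  rewrite !sumR_plus, !sumR_scal_l, (mean_inc n i Hn).
  replace (sumR (Nset M n) (p (c n))) with 1 by (symmetry; exact (Hp1 n Hn)).
  assert (Hd : v i * x * (splus M c p i n - sminus M c p i n) <= - fs * x).
  { destruct (Nat.eq_dec (nth i n 0%nat) 0) as [E|E].
    - unfold x. rewrite E. simpl. lra.
    - destruct (sigma_spec i Hi) as [[Hub _] Hneg].
      assert (Hin : drift_set M c p i (splus M c p i n - sminus M c p i n)).
      { exists n. split; auto. split; auto. split; [unfold inS in Hn; lia|lia]. }
      specialize (Hub _ Hin).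
      assert (Evs : v i * Rsup (drift_set M c p i) = - fs).
      { unfold v, vcoef. fold fs. field. lra. }
      assert (0 <= x) by apply pos_INR.
      assert (v i * (splus M c p i n - sminus M c p i n) <= - fs) by (rewrite <- Evs; apply Rmult_le_compat_l; lra).
      nra. }
  nra.
Qed.

Lemma V_drift n : inS M n ->
  Pstep M c p (Vfun M nK c p f) n <= Vfun M nK c p f n - 2 * fs * nrm M n + sumR (seq 0 M) v.
Proof.
  intros Hn. unfold Pstep, Vfun.
  rewrite (sumR_ext_in _ _ (fun u => sumR (seq 0 M) (fun i => p (c n) u *
      (vcoef M nK c p f i * INR (nth i (addv n u) 0%nat) ^ 2))))
    by (intros; rewrite sumR_scal_l; reflexivity).
  rewrite sumR_swap.
  apply Rle_trans with (sumR (seq 0 M) (fun i => v i * INR (nth i n 0%nat) ^ 2 +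
     (-2 * fs) * INR (nth i n 0%nat) + v i)).
  - apply sumR_le_in. intros i Hi. apply in_seq in Hi. apply drift_i; auto. lia.
  - rewrite !sumR_plus, sumR_scal_l. unfold nrm. fold v. lra.
Qed.

Lemma F_bound F n : (forall n, inS M n -> (c n < nK)%nat) -> C_linear M c F f -> inS M n ->
  F n <= fs * (1 + nrm M n).
Proof.
  intros Hc HFlin Hn. rewrite (HFlin n Hn). specialize (Hc n Hn).
  assert (f (c n) 0%nat <= fs) by (apply fstar_ge; lia).
  assert (sumR (seq 0 M) (fun j => f (c n) (S j) * INR (nth j n 0%nat)) <= fs * nrm M n).
  { unfold nrm. rewrite <- sumR_scal_l. apply sumR_le_in. intros j Hj. apply in_seq in Hj.
    apply Rmult_le_compat_r; [apply pos_INR|]. apply fstar_ge; lia. }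
  lra.
Qed.
End VF.

Theorem theorem4p2
  (M nK : nat) (c : list nat -> nat) (p : nat -> list Z -> R)
  (F : list nat -> R) (f : nat -> nat -> R)
  (HM : (1 <= M)%nat)
  (Hc : forall n, inS M n -> (c n < nK)%nat)
  (HN : forall n n', inS M n -> inS M n' -> c n = c n' -> Nset M n = Nset M n')
  (Hp0 : forall n u, inS M n -> In u (Nset M n) -> 0 <= p (c n) u)
  (Hp1 : forall n, inS M n -> sumR (Nset M n) (fun u => p (c n) u) = 1)
  (Hirr : irreducible M c p)
  (Haper : aperiodic M c p)
  (Hrec : positive_recurrent M c p)
  (Hdrift : negative_drift M c p)
  (HF0 : forall n, inS M n -> 0 <= F n)
  (HFlin : C_linear M c F f) :
  exists b0 : R, forall n u t, inS M n -> In u (Nset M n) ->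
    Rabs (Dt M c p F t n u) <= Vfun M nK c p f n + Vfun M nK c p f (addv n u) + b0.
Proof.
  apply (final_abstract M c p Hp0 Hp1 Hirr Hrec F (Vfun M nK c p f) (fstar M nK f)
           (sumR (seq 0 M) (vcoef M nK c p f)) HF0).
  - intros n Hn. apply (F_bound M nK c f F n Hc HFlin Hn).
  - intros n _. apply (V_nonneg M nK c p f Hdrift).
  - intros n Hn. apply (V_drift M nK c p f Hp0 Hp1 Hdrift n Hn).
  - pose proof (fstar_ge1 M nK f). lra.
  - apply (s_nonneg M nK c p f Hdrift).
Qed.
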